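(* Let $M=B\circ S$ and $x,x'\in\mathbb X$. Let $A_1,\dots,A_I$ and $E_1,\dots,E_J$ be two partitions of $\mathbb Y$ into disjoint sets such that $\Pr[S(x)\in A_i]>0$ for all $i$ and $\Pr[S(x')\in E_j]>0$ for all $j$. Let $\gamma$ be any coupling between the $I+J$ conditional pmfs $s_x(\cdot\mid A_1),\dots,s_x(\cdot\mid A_I),s_{x'}(\cdot\mid E_1),\dots,s_{x'}(\cdot\mid E_J)$, viewed as a pmf on tuples $(\mathbf y^{(1)},\mathbf y^{(2)})\in\mathbb Y^I\times\mathbb Y^J$. Then $$\Psi_\alpha(m_x\|m_{x'})\le\sum_{(\mathbf y^{(1)},\mathbf y^{(2)})\in\mathbb Y^{I+J}} c_\alpha(\mathbf y^{(1)},\mathbf y^{(2)})\,\gamma(\mathbf y^{(1)},\mathbf y^{(2)}),$$ where $$c_\alpha(\mathbf y^{(1)},\mathbf y^{(2)})=\Psi_\alpha\Big(\sum_{i=1}^I b_{y^{(1)}_i}\Pr[S(x)\in A_i]\ \Big\|\ \sum_{j=1}^J b_{y^{(2)}_j}\Pr[S(x')\in E_j]\Big).$$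
   Context: Setting: $\mathbb A$ is a finite set, the dataset space $\mathbb X\subseteq\mathcal P(\mathbb A)$, and $\mathbb Y$ is a finite batch space. A subsampling scheme $S$ assigns to each dataset $x$ a pmf $s_x$ on $\mathbb Y$; $\Pr[S(x)\in A]=\sum_{y\in A}s_x(y)$ and $s_x(y\mid A)=s_x(y)\mathbb 1[y\in A]/\Pr[S(x)\in A]$. A base mechanism $B$ assigns to each batch $y$ a probability density $b_y$ on $\mathbb R^D$. The subsampled mechanism $M=B\circ S$ has density $m_x(z)=\sum_{y}b_y(z)s_x(y)$. $H_\alpha(p\|q)=\int\max\{p-\alpha q,0\}dz$ ($\alpha\ge0$), $\Lambda_\alpha(p\|q)=\int p^\alpha q^{1-\alpha}dz$ ($\alpha>1$); $\Psi_\alpha$ denotes either $H_\alpha$ with $\alpha\ge0$ or $\Lambda_\alpha$ with $\alpha>1$. A coupling between pmfs $p_1,\dots,p_N$ on $\mathbb Y$ is a pmf on $\mathbb Y^N$ whose $n$-th marginal is $p_n$. *)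

(* Defs.v *)
From HB Require Import structures.
From mathcomp Require Import all_boot all_order all_algebra.
From mathcomp Require Import all_classical all_reals all_analysis.
Set Implicit Arguments. Unset Strict Implicit. Unset Printing Implicit Defensive.
Import Order.TTheory GRing.Theory Num.Theory.
Local Open Scope ring_scope.

(* Which divergence Psi_alpha is meant:
   HS  = hockey-stick H_alpha(p||q) = \int max{p - alpha q, 0}   (alpha >= 0)
   REN = Lambda_alpha(p||q) = \int p^alpha q^(1-alpha)           (alpha > 1) *)
Inductive divkind := HS | REN.

Definition alpha_ok {R : realType} (k : divkind) (alpha : R) : Prop :=
  match k with HS => 0 <= alpha | REN => 1 < alpha end.

(* integrand of Lambda_alpha, with the usual conventions
   0^alpha 0^(1-alpha) = 0 and a^alpha 0^(1-alpha) = +oo for a > 0 *)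
Definition lam_integrand {R : realType} (alpha a b : R) : \bar R :=
  if b == 0 then (if a == 0 then 0%E else +oo%E)
  else ((a `^ alpha) * (b `^ (1 - alpha)))%:E.

Definition Psi {R : realType} {d} {T : measurableType d}
  (mu : {measure set T -> \bar R}) (k : divkind) (alpha : R)
  (p q : T -> R) : \bar R :=
  match k with
  | HS => (\int[mu]_z (Num.max (p z - alpha * q z) 0)%:E)%E
  | REN => (\int[mu]_z lam_integrand alpha (p z) (q z))%E
  end.

Definition is_density {R : realType} {d} {T : measurableType d}
  (mu : {measure set T -> \bar R}) (f : T -> R) : Prop :=
  (forall z, 0 <= f z) /\ measurable_fun setT f /\
  (\int[mu]_z (f z)%:E = 1)%E.

Definition is_pmf {R : realType} {Y : finType} (p : Y -> R) : Prop :=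
  (forall y, 0 <= p y) /\ \sum_(y : Y) p y = 1.

Definition PrS {R : realType} {Y : finType} (p : Y -> R) (B : {set Y}) : R :=
  \sum_(y in B) p y.

Definition condp {R : realType} {Y : finType} (p : Y -> R) (B : {set Y})
  : Y -> R := fun y => (if y \in B then p y else 0) / PrS p B.

(* density of the subsampled mechanism M = B o S at dataset x *)
Definition mdens {R : realType} {Y : finType} {T : Type}
  (b : Y -> T -> R) (sx : Y -> R) : T -> R :=
  fun z => \sum_(y : Y) b y z * sx y.

Definition is_partition {Y : finType} {n : nat} (F : 'I_n -> {set Y}) : Prop :=
  (forall i j, i != j -> [disjoint F i & F j]) /\
  \bigcup_(i < n) F i = [set: Y].

Definition is_coupling {R : realType} {Y : finType} {I J : nat}
  (p : 'I_I -> Y -> R) (q : 'I_J -> Y -> R)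
  (gamma : {ffun 'I_I -> Y} * {ffun 'I_J -> Y} -> R) : Prop :=
  is_pmf gamma /\
  (forall i y, \sum_(t : {ffun 'I_I -> Y} * {ffun 'I_J -> Y} | t.1 i == y) gamma t = p i y) /\
  (forall j y, \sum_(t : {ffun 'I_I -> Y} * {ffun 'I_J -> Y} | t.2 j == y) gamma t = q j y).

(* Main.v *)
Require Import Defs.
From HB Require Import structures.
From mathcomp Require Import all_boot all_order all_algebra.
From mathcomp Require Import all_classical all_reals all_analysis.
From mathcomp Require Import ring lra.
From mathcomp Require Import measurable_realfun.
Import Order.TTheory GRing.Theory Num.Theory.
Local Open Scope ring_scope.

Section Aux.
Context {R : realType}.
Implicit Types (a p q c : R).

Lemma maxsub (u v : R) : Num.max (u + v) 0 <= Num.max u 0 + Num.max v 0.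
Proof.
have [hu|hu] := leP u 0; have [hv|hv] := leP v 0;
  rewrite ?(max_r hu) ?(max_r hv) ?(max_l (ltW hu)) ?(max_l (ltW hv));
  have [h|h] := leP (u + v) 0;
  rewrite ?(max_r h) ?(max_l (ltW h)); lra.
Qed.

Lemma max0ge (u : R) : 0 <= Num.max u 0.
Proof. by rewrite le_max lexx orbT. Qed.

Lemma conv2 {a w x y : R} : 1 <= a -> 0 <= w -> w <= 1 -> 0 <= x -> 0 <= y ->
  (w * x + (1 - w) * y) `^ a <= w * x `^ a + (1 - w) * y `^ a.
Proof.
move=> a1 w0 w1 x0 y0.
have := @convex_powR R a a1 (Itv01 w0 w1) x y.
rewrite !convRE /=.
apply; by rewrite inE /= in_itv /= andbT.
Qed.

Lemma powhelp a p q : 0 <= p -> 0 < q ->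
  p `^ a * q `^ (1 - a) = q * (p / q) `^ a.
Proof.
move=> p0 q0.
have q0' : 0 <= q by apply: ltW.
have qi : 0 <= q^-1 by rewrite invr_ge0.
rewrite (powRM _ p0 qi).
rewrite -(powR_inv1 q0') -powRrM.
have -> : q * (p `^ a * q `^ (-1 * a)) = p `^ a * (q `^ 1 * q `^ (- a)).
  by rewrite (powRr1 q0') mulN1r; ring.
by rewrite -powRD // (gt_eqF q0) implybT.
Qed.

Lemma rensub a p1 p2 q1 q2 : 1 < a -> 0 <= p1 -> 0 <= p2 -> 0 < q1 -> 0 < q2 ->
  (p1 + p2) `^ a * (q1 + q2) `^ (1 - a) <=
  p1 `^ a * q1 `^ (1 - a) + p2 `^ a * q2 `^ (1 - a).
Proof.
move=> a1 p10 p20 q10 q20.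
have Q0 : 0 < q1 + q2 by lra.
rewrite !powhelp ?addr_ge0 //.
set w := q1 / (q1 + q2).
have w0 : 0 <= w by rewrite divr_ge0 ?ltW.
have w1 : w <= 1 by rewrite ler_pdivrMr // mul1r; lra.
have ee : (p1 + p2) / (q1 + q2) = w * (p1 / q1) + (1 - w) * (p2 / q2).
  by rewrite /w; field; rewrite (lt0r_neq0 q10) (lt0r_neq0 q20) (lt0r_neq0 Q0).
rewrite ee.
have r10 : 0 <= p1 / q1 by rewrite divr_ge0 // ltW.
have r20 : 0 <= p2 / q2 by rewrite divr_ge0 // ltW.
have := conv2 (ltW a1) w0 w1 r10 r20 => /(ler_wpM2l (ltW Q0)) H.
apply: (le_trans H).
suff -> : (q1 + q2) * (w * (p1 / q1) `^ a + (1 - w) * (p2 / q2) `^ a) =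
  q1 * (p1 / q1) `^ a + q2 * (p2 / q2) `^ a by [].
by rewrite /w; field; rewrite (lt0r_neq0 Q0).
Qed.

End Aux.

Section Gk.
Context {R : realType}.
Local Open Scope ereal_scope.

Definition gk (k : divkind) (a p q : R) : \bar R :=
  match k with
  | HS => (Num.max (p - a * q) 0)%:E
  | REN => lam_integrand a p q
  end.

Lemma ge0_nNy (x : \bar R) : 0 <= x -> x != -oo.
Proof. by move=> h; rewrite gt_eqF // (lt_le_trans ltNy0 h). Qed.

Lemma gk00 k a : gk k a 0 0 = 0.
Proof. by case: k => /=; rewrite /lam_integrand ?eqxx // mulr0 subr0 maxxx. Qed.

Lemma gk_ge0 k a p q : 0 <= gk k a p q.
Proof.
case: k => /=; first by rewrite lee_fin max0ge.
rewrite /lam_integrand; case: ifP => _; first by case: ifP.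
by rewrite lee_fin mulr_ge0 // powR_ge0.
Qed.

Lemma gk_hom k a c p q : (0 <= c)%R -> (0 <= p)%R -> (0 <= q)%R ->
  gk k a (c * p) (c * q) = c%:E * gk k a p q.
Proof.
move=> c0 p0 q0; case: k => /=.
  rewrite -EFinM; congr EFin; rewrite maxr_pMr // mulr0; congr Num.max.
  by rewrite mulrBr mulrCA.
have [->|cn] := eqVneq c 0%R.
  by rewrite !mul0r mul0e /lam_integrand eqxx.
have cp : (0 < c)%R by rewrite lt0r cn.
rewrite /lam_integrand !mulf_eq0 (negbTE cn) /=.
case: ifP => _.
  case: ifP => _; first by rewrite mule0.
  by rewrite gt0_muley // lte_fin.
rewrite -EFinM; congr EFin; rewrite !powRM //.
have hc : (c `^ a * c `^ (1 - a) = c)%R.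
  rewrite -powRD; last by rewrite cn implybT.
  by rewrite (_ : (a + (1 - a) = 1)%R) ?powRr1 // addrC subrK.
by rewrite mulrACA hc.
Qed.

Lemma gk_sub k a p1 p2 q1 q2 : alpha_ok k a ->
  (0 <= p1)%R -> (0 <= p2)%R -> (0 <= q1)%R -> (0 <= q2)%R ->
  gk k a (p1 + p2) (q1 + q2) <= gk k a p1 q1 + gk k a p2 q2.
Proof.
move=> ha p10 p20 q10 q20; case: k ha => /= ha.
  rewrite -EFinD lee_fin.
  rewrite (_ : (p1 + p2 - a * (q1 + q2) = (p1 - a * q1) + (p2 - a * q2))%R).
    exact: maxsub.
  by rewrite mulrDr opprD addrACA.
have hg := gk_ge0 REN a.
have [q1z|q1n] := eqVneq q1 0%R.
  subst q1; rewrite add0r.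
  have [p1z|p1n] := eqVneq p1 0%R.
    by subst p1; rewrite add0r /lam_integrand eqxx add0e.
  rewrite {2}/lam_integrand eqxx (negbTE p1n) addye ?leey //.
  exact: ge0_nNy (hg p2 q2).
have [q2z|q2n] := eqVneq q2 0%R.
  subst q2; rewrite addr0.
  have [p2z|p2n] := eqVneq p2 0%R.
    by subst p2; rewrite addr0 {3}/lam_integrand eqxx adde0.
  rewrite {3}/lam_integrand eqxx (negbTE p2n) addey ?leey //.
  exact: ge0_nNy (hg p1 q1).
have q1p : (0 < q1)%R by rewrite lt0r q1n.
have q2p : (0 < q2)%R by rewrite lt0r q2n.
have Qn : (q1 + q2 != 0)%R by rewrite lt0r_neq0 // addr_gt0.
rewrite /lam_integrand (negbTE q1n) (negbTE q2n) (negbTE Qn) -EFinD lee_fin.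
exact: rensub.
Qed.

Lemma gk_sum k a (T' : Type) (r : seq T') (F G : T' -> R) : alpha_ok k a ->
  (forall t, 0 <= F t)%R -> (forall t, 0 <= G t)%R ->
  gk k a (\sum_(t <- r) F t)%R (\sum_(t <- r) G t)%R <=
  \sum_(t <- r) gk k a (F t) (G t).
Proof.
move=> ha F0 G0; elim: r => [|h r ih]; first by rewrite !big_nil gk00.
rewrite !big_cons; apply: le_trans (@gk_sub k a _ _ _ _ ha _ _ _ _) (leeD2l _ ih) => //;
  exact: sumr_ge0.
Qed.

Lemma gk_jensen k a (TT : finType) (g P Q : TT -> R) : alpha_ok k a ->
  (forall t, 0 <= g t)%R -> (forall t, 0 <= P t)%R -> (forall t, 0 <= Q t)%R ->
  gk k a (\sum_t g t * P t)%R (\sum_t g t * Q t)%R <=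
  \sum_t (g t)%:E * gk k a (P t) (Q t).
Proof.
move=> ha g0 P0 Q0.
apply: le_trans (@gk_sum k a _ _ (fun t => g t * P t)%R (fun t => g t * Q t)%R ha _ _) _.
- by move=> t; rewrite mulr_ge0.
- by move=> t; rewrite mulr_ge0.
by apply: lee_sum => t _; rewrite gk_hom.
Qed.

Lemma gk_meas d (T : measurableType d) k a (P Q : T -> R) :
  measurable_fun setT P -> measurable_fun setT Q ->
  measurable_fun setT ((fun z => gk k a (P z) (Q z)) : T -> \bar R).
Proof.
move=> mP mQ; case: k => /=.
  apply/measurable_EFinP.
  apply: (measurable_realfun.measurable_maxr _ (measurable_cst _)).
  apply: measurable_realfun.measurable_funB => //.
  exact: measurable_realfun.measurable_funM.
rewrite /lam_integrand.
apply: measurable_fun_ifT.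
  exact: (measurable_realfun.measurable_fun_eqr mQ (measurable_cst _)).
  apply: measurable_fun_ifT => //.
  exact: (measurable_realfun.measurable_fun_eqr mP (measurable_cst _)).
apply/measurable_EFinP.
apply: measurable_realfun.measurable_funM.
  exact: measurableT_comp (measurable_realfun.measurable_powR _) mP.
exact: measurableT_comp (measurable_realfun.measurable_powR _) mQ.
Qed.

End Gk.

Lemma Psi_gk {R : realType} {d} {T : measurableType d}
  (mu : {measure set T -> \bar R}) k a (p q : T -> R) :
  Psi mu k a p q = (\int[mu]_z gk k a (p z) (q z))%E.
Proof. by case: k. Qed.

Lemma mix {R : realType} (Y TT : finType) (n : nat) (F : 'I_n -> {set Y})
  (p : Y -> R) (proj : TT -> {ffun 'I_n -> Y}) (g : TT -> R) (Z : Type)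
  (b : Y -> Z -> R) :
  is_partition F -> (forall i, 0 < PrS p (F i)) ->
  (forall i y, \sum_(t | proj t i == y) g t = condp p (F i) y) ->
  forall z, mdens b p z = \sum_t g t * \sum_(i < n) b (proj t i) z * PrS p (F i).
Proof.
move=> [hdis hcup] hpos hmarg z.
rewrite /mdens; symmetry.
under eq_bigr do rewrite big_distrr.
rewrite exchange_big /=.
transitivity (\sum_(i < n) \sum_y b y z * (if y \in F i then p y else 0)).
  apply: eq_bigr => i _.
  rewrite (partition_big (fun t => proj t i) xpredT) //=.
  apply: eq_bigr => y _.
  transitivity ((\sum_(t | proj t i == y) g t) * (b y z * PrS p (F i))).
    by rewrite big_distrl; apply: eq_bigr => t /eqP ->.
  rewrite hmarg /condp.
  set v := (if y \in F i then p y else 0).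
  have := lt0r_neq0 (hpos i) => hn.
  by field.
rewrite exchange_big /=; apply: eq_bigr => y _.
rewrite -big_distrr /=; congr (_ * _).
have : y \in \bigcup_(i < n) F i by rewrite hcup inE.
case/bigcupP => i0 _ yi0.
rewrite (bigD1 i0) //= yi0 big1 ?addr0 // => j hj.
by rewrite (disjointFl (hdis _ _ hj) yi0).
Qed.

Theorem theorem3p4 (R : realType) (d : measure_display) (T : measurableType d)
  (mu : {measure set T -> \bar R}) (mu_sfin : sigma_finite setT mu)
  (Atype : finType) (Y : finType) (X : {set {set Atype}})
  (s : {set Atype} -> Y -> R) (s_pmf : forall x, x \in X -> is_pmf (s x))
  (b : Y -> T -> R) (b_dens : forall y, is_density mu (b y))
  (k : divkind) (alpha : R) (halpha : alpha_ok k alpha)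
  (x x' : {set Atype}) (hx : x \in X) (hx' : x' \in X)
  (I J : nat) (A : 'I_I -> {set Y}) (E : 'I_J -> {set Y})
  (hA : is_partition A) (hE : is_partition E)
  (hAp : forall i, 0 < PrS (s x) (A i)) (hEp : forall j, 0 < PrS (s x') (E j))
  (gamma : {ffun 'I_I -> Y} * {ffun 'I_J -> Y} -> R)
  (hgamma : is_coupling (fun i => condp (s x) (A i)) (fun j => condp (s x') (E j)) gamma) :
  (Psi mu k alpha (mdens b (s x)) (mdens b (s x')) <=
   \sum_(t : {ffun 'I_I -> Y} * {ffun 'I_J -> Y})
     (gamma t)%:E *
     Psi mu k alpha
       (fun z => (\sum_(i < I) b (t.1 i) z * PrS (s x) (A i))%R)
       (fun z => (\sum_(j < J) b (t.2 j) z * PrS (s x') (E j))%R))%E.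
Proof.
have [[g0 _] [m1 m2]] := hgamma.
set P := fun (t : {ffun 'I_I -> Y} * {ffun 'I_J -> Y}) z =>
  (\sum_(i < I) b (t.1 i) z * PrS (s x) (A i))%R.
set Q := fun (t : {ffun 'I_I -> Y} * {ffun 'I_J -> Y}) z =>
  (\sum_(j < J) b (t.2 j) z * PrS (s x') (E j))%R.
have hmx : mdens b (s x) = fun z => (\sum_t gamma t * P t z)%R.
  by apply: funext => z; apply: (@mix R Y _ I A (s x) (fun t => t.1))...
have hmx' : mdens b (s x') = fun z => (\sum_t gamma t * Q t z)%R.
  by apply: funext => z; apply: (@mix R Y _ J E (s x') (fun t => t.2))...
have b0 y z : 0 <= b y z := (b_dens y).1 z.
have mb y : measurable_fun setT (b y) := (b_dens y).2.1.
have pr0 (xx : {set Atype}) (hxx : xx \in X) (B : {set Y}) : 0 <= PrS (s xx) B.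
  by apply: sumr_ge0 => y _; exact: (s_pmf xx hxx).1.
have P0 t z : 0 <= P t z by apply: sumr_ge0 => i _; rewrite mulr_ge0 // pr0.
have Q0 t z : 0 <= Q t z by apply: sumr_ge0 => i _; rewrite mulr_ge0 // pr0.
have mP t : measurable_fun setT (P t).
  apply: measurable_sum => i; apply: measurable_funM => //; exact: measurable_cst.
have mQ t : measurable_fun setT (Q t).
  apply: measurable_sum => i; apply: measurable_funM => //; exact: measurable_cst.
rewrite Psi_gk hmx hmx'.
under eq_bigr do rewrite Psi_gk.
set RHS := (\sum_(t <- _) _)%E.
have -> : RHS = (\int[mu]_z \sum_t (gamma t)%:E * gk k alpha (P t z) (Q t z))%E.
  rewrite ge0_integral_sum //.
  - apply: eq_bigr => t _; rewrite ge0_integralZl //.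
    + exact: gk_meas.
    + by move=> z _; exact: gk_ge0.
    + by rewrite lee_fin.
  - move=> t; apply: measurable_funeM; exact: gk_meas.
  - by move=> t z _; rewrite mule_ge0 ?lee_fin ?gk_ge0.
apply: ge0_le_integral => //.
- by move=> z _; exact: gk_ge0.
- apply: gk_meas.
  + by apply: measurable_sum => t; apply: measurable_funM => //; exact: measurable_cst.
  + by apply: measurable_sum => t; apply: measurable_funM => //; exact: measurable_cst.
- apply: emeasurable_sum => t; apply: measurable_funeM; exact: gk_meas.
- by move=> z _; apply: gk_jensen.
Qed.
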